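(* If $T\in\mathscr{E}(X)$ and $\xi$ is a coarse filter on $X$, then $\inf_{F\in\xi}\|\mathbf{1}_FT\|=\inf_{F\in\xi}\|T\mathbf{1}_F\|$, both infima being taken over measurable $F\in\xi$.
   Context: $(X,d)$ is a non-compact proper metric space, $B_x(r)=\{y:d(x,y)\le r\}$, and $\mu$ is a Radon measure with support $X$ such that $\mu(B_x(r))>0$ and $\sup_x\mu(B_x(r))<\infty$ for all $r>0$. On $L^2(X,\mu)$, $\mathbf{1}_A$ is multiplication by the characteristic function of measurable $A$. A kernel $k$ on $X\times X$ is controlled if $k(x,y)=0$ whenever $d(x,y)>r$ for some $r$; $\mathscr{E}(X)$ is the norm closure of the operators $(Op(k)f)(x)=\int k(x,y)f(y)d\mu(y)$, $k$ bounded, uniformly continuous and controlled. A filter is a nonempty family of subsets, not containing $\emptyset$, stable under finite intersections and supersets. With $F^{(r)}=\{x:\inf_{y\notin F}d(x,y)>r\}$, a filter $\xi$ is coarse if $F\in\xi\Rightarrow F^{(r)}\in\xi$ for all $r>0$. *)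

(* Defs.v *)
From HB Require Import structures.
From mathcomp Require Import all_boot all_order all_algebra.
From mathcomp Require Import all_classical all_reals all_analysis.
From mathcomp Require Import complex.

Set Implicit Arguments.
Unset Strict Implicit.
Unset Printing Implicit Defensive.

Import Order.TTheory GRing.Theory Num.Theory.
Import numFieldNormedType.Exports.

Local Open Scope classical_set_scope.
Local Open Scope ring_scope.

Section RoeDefs.
Context {R : realType} {d : measure_display} {X : measurableType d}.
Variable dist : X -> X -> R.

Definition is_metric : Prop :=
  [/\ (forall x y, 0 <= dist x y),
      (forall x y, dist x y = 0 <-> x = y),
      (forall x y, dist x y = dist y x) &
      (forall x y z, dist x z <= dist x y + dist y z)].

Definition cball (x : X) (r : R) : set X := [set y | dist x y <= r].

Definition dopen (U : set X) : Prop :=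
  forall x, U x -> exists2 r : R, 0 < r & [set y | dist x y < r] `<=` U.

Definition dcompact (A : set X) : Prop :=
  forall G : set (set X), G `<=` dopen -> A `<=` \bigcup_(U in G) U ->
    exists (n : nat) (V : nat -> set X),
      (forall i, (i < n)%N -> G (V i)) /\ A `<=` \bigcup_(i in [set i | (i < n)%N]) V i.

Definition proper_space : Prop := forall x r, dcompact (cball x r).

Definition borel_structure : Prop := (@measurable d X) = <<s dopen >>.

Definition radon (mu : {measure set X -> \bar R}) : Prop :=
  [/\ (forall x, exists U, [/\ dopen U, U x & (mu U < +oo)%E]),
      (forall A, measurable A ->
         mu A = ereal_inf [set mu U | U in [set U | dopen U /\ A `<=` U]]) &
      (forall U, dopen U ->
         mu U = ereal_sup [set mu K | K in [set K | [/\ dcompact K, measurable K & K `<=` U]]])].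

(** supp mu = X : every nonempty open set has positive measure *)
Definition full_support (mu : {measure set X -> \bar R}) : Prop :=
  forall U, dopen U -> U !=set0 -> (0 < mu U)%E.

Definition cabs (z : R[i]) : R := Num.sqrt (complex.Re z ^+ 2 + complex.Im z ^+ 2).

Definition cmeasurable (f : X -> R[i]) : Prop :=
  measurable_fun setT (fun x => complex.Re (f x)) /\ measurable_fun setT (fun x => complex.Im (f x)).

Definition L2norm (mu : {measure set X -> \bar R}) (f : X -> R[i]) : \bar R :=
  Lnorm mu 2%:E (fun x => (cabs (f x))%:E).

Definition inL2 (mu : {measure set X -> \bar R}) (f : X -> R[i]) : Prop :=
  cmeasurable f /\ (L2norm mu f < +oo)%E.

(** operator norm on L^2(X,mu) of a map acting on (representatives of) L^2 functions *)
Definition opnorm (mu : {measure set X -> \bar R})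
    (S : (X -> R[i]) -> (X -> R[i])) : \bar R :=
  ereal_sup [set L2norm mu (S f) | f in [set f | inL2 mu f /\ (L2norm mu f <= 1)%E]].

Definition cintegral (mu : {measure set X -> \bar R}) (g : X -> R[i]) : R[i] :=
  Complex (Rintegral mu setT (fun y => complex.Re (g y))) (Rintegral mu setT (fun y => complex.Im (g y))).

Definition Op (mu : {measure set X -> \bar R}) (k : X -> X -> R[i])
    (f : X -> R[i]) : X -> R[i] :=
  fun x => cintegral mu (fun y => k x y * f y).

Definition good_kernel (k : X -> X -> R[i]) : Prop :=
  [/\ (exists M : R, forall x y, cabs (k x y) <= M),
      (forall e : R, 0 < e -> exists2 del : R, 0 < del &
         forall x y x' y', dist x x' < del -> dist y y' < del ->
           cabs (k x y - k x' y') < e) &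
      (exists r : R, forall x y, r < dist x y -> k x y = 0)].

Definition in_EX (mu : {measure set X -> \bar R})
    (T : (X -> R[i]) -> (X -> R[i])) : Prop :=
  (forall f, inL2 mu f -> inL2 mu (T f)) /\
  (forall e : R, 0 < e -> exists k, good_kernel k /\
     (opnorm mu (fun f x => (T f x - Op mu k f x)%R) <= e%:E)%E).

Definition mulind (A : set X) (f : X -> R[i]) : X -> R[i] :=
  fun x => Complex (\1_A x) 0 * f x.

Definition is_filter (xi : set (set X)) : Prop :=
  [/\ xi !=set0, ~ xi set0,
      (forall F G, xi F -> xi G -> xi (F `&` G)) &
      (forall F G, xi F -> F `<=` G -> xi G)].

(** F^(r) = { x | inf_{y notin F} d(x,y) > r }  (inf of the empty set = +oo) *)
Definition r_interior (F : set X) (r : R) : set X :=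
  [set x | (r%:E < ereal_inf [set (dist x y)%:E | y in ~` F])%E].

Definition coarse_filter (xi : set (set X)) : Prop :=
  is_filter xi /\ (forall F (r : R), xi F -> 0 < r -> xi (r_interior F r)).

End RoeDefs.

(* Main.v *)
Require Import Defs.
From HB Require Import structures.
From mathcomp Require Import all_boot all_order all_algebra.
From mathcomp Require Import all_classical all_reals all_analysis.
From mathcomp Require Import complex measurable_realfun.
From mathcomp Require Import lra ring.
Import Order.TTheory GRing.Theory Num.Theory.
Import numFieldNormedType.Exports.
Local Open Scope classical_set_scope.
Local Open Scope ring_scope.

Section C.
Local Open Scope complex_scope.
Context {R : realType}.
Implicit Types z w : R[i].
Lemma cabsE z : `|z| = (cabs z)%:C.
Proof. by rewrite normc_def. Qed.
Lemma cabs_ge0 z : 0 <= cabs z.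
Proof. exact: sqrtr_ge0. Qed.
Lemma cabsD z w : cabs (z + w) <= cabs z + cabs w.
Proof. by have := ler_normD z w; rewrite !cabsE -rmorphD lecR. Qed.
Lemma cabsM z w : cabs (z * w) = cabs z * cabs w.
Proof. by have := normrM z w; rewrite !cabsE -rmorphM => -[]. Qed.
Lemma cabsN z : cabs (- z) = cabs z.
Proof. by have := normrN z; rewrite !cabsE => -[]. Qed.
Lemma cabs0 : cabs (0 : R[i]) = 0.
Proof. by have := @normr0 _ (R[i]); rewrite !cabsE => -[]. Qed.
Lemma Re_le z : `|complex.Re z| <= cabs z.
Proof.
rewrite /cabs -sqrtr_sqr ler_sqrt ?addr_ge0 ?sqr_ge0 // lerDl sqr_ge0 //.
Qed.
Lemma Im_le z : `|complex.Im z| <= cabs z.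
Proof.
rewrite /cabs -sqrtr_sqr ler_sqrt ?addr_ge0 ?sqr_ge0 // lerDr sqr_ge0 //.
Qed.
Lemma cabs_real (a : R) : cabs (Complex a 0) = `|a|.
Proof. by rewrite /cabs expr0n /= addr0 sqrtr_sqr. Qed.
End C.

Section L.
Context {R : realType} {d : measure_display} {X : measurableType d}.
Variable mu : {measure set X -> \bar R}.

Lemma LnormE (f : X -> R) : Lnorm mu 2%:E (EFin \o f) =
  ((\int[mu]_x (`|f x| `^ 2)%:E) `^ 2^-1)%E.
Proof.
rewrite unlock /=; congr (_ `^ _)%E; apply: eq_integral => x _.
Qed.

Lemma Lnorm_mono (f g : X -> R) : measurable_fun setT f -> measurable_fun setT g ->
  (forall x, `|f x| <= `|g x|) ->
  (Lnorm mu 2%:E (EFin \o f) <= Lnorm mu 2%:E (EFin \o g))%E.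
Proof.
move=> mf mg fg; rewrite !LnormE.
apply: gt0_ler_poweR => //.
- by rewrite in_itv /= leey andbT integral_ge0// => x _; rewrite lee_fin powR_ge0.
- by rewrite in_itv /= leey andbT integral_ge0// => x _; rewrite lee_fin powR_ge0.
rewrite ge0_le_integral//.
- apply/measurable_EFinP; apply: (@measurableT_comp _ _ _ _ _ _ (@powR R ^~ 2)) => //.
  exact: measurableT_comp.
- apply/measurable_EFinP; apply: (@measurableT_comp _ _ _ _ _ _ (@powR R ^~ 2)) => //.
  exact: measurableT_comp.
by move=> x _; rewrite lee_fin ge0_ler_powR// nnegrE.
Qed.

Lemma Lnorm_le3 (h a b c : X -> R) : measurable_fun setT h ->
  measurable_fun setT a -> measurable_fun setT b -> measurable_fun setT c ->
  (forall x, `|h x| <= `|a x| + `|b x| + `|c x|) ->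
  (Lnorm mu 2%:E (EFin \o h) <=
   Lnorm mu 2%:E (EFin \o a) + Lnorm mu 2%:E (EFin \o b) + Lnorm mu 2%:E (EFin \o c))%E.
Proof.
move=> mh ma mb mc hb.
have mna : measurable_fun setT (fun x => `|a x|) by exact: measurableT_comp.
have mnb : measurable_fun setT (fun x => `|b x|) by exact: measurableT_comp.
have mnc : measurable_fun setT (fun x => `|c x|) by exact: measurableT_comp.
have En (f : X -> R) : Lnorm mu 2%:E (EFin \o (fun x => `|f x|)) = Lnorm mu 2%:E (EFin \o f).
  by rewrite !LnormE; congr (_ `^ _)%E; apply: eq_integral => x _; rewrite normr_id.
apply: (le_trans (@Lnorm_mono h (fun x => `|a x| + `|b x| + `|c x|) mh _ _)).
- by apply: measurable_funD => //; exact: measurable_funD.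
- by move=> x; rewrite (le_trans (hb x))// ler_norm.
have mab : measurable_fun setT (fun x => `|a x| + `|b x|) by exact: measurable_funD.
apply: (le_trans (@minkowski_EFin _ _ _ mu (fun x => `|a x| + `|b x|) (fun x => `|c x|) 2 mab mnc _)) => //.
- by rewrite ler1n.
apply: leeD; last by rewrite En.
apply: (le_trans (@minkowski_EFin _ _ _ mu (fun x => `|a x|) (fun x => `|b x|) 2 mna mnb _)) => //.
- by rewrite ler1n.
by apply: leeD; rewrite En.
Qed.
End L.

Section M.
Context {R : realType} {d : measure_display} {X : measurableType d}.
Variable dist : X -> X -> R.
Hypothesis Hm : is_metric dist.
Hypothesis Hb : borel_structure dist.

Lemma dist_ge0 x y : 0 <= dist x y. Proof. by case: Hm. Qed.
Lemma dist_sym x y : dist x y = dist y x. Proof. by case: Hm. Qed.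
Lemma dist_tri x y z : dist x z <= dist x y + dist y z. Proof. by case: Hm. Qed.
Lemma dist_xx x : dist x x = 0. Proof. by case: Hm => _ H _ _; apply/H. Qed.

Lemma dopen_meas (U : set X) : dopen dist U -> measurable U.
Proof. by move=> oU; rewrite Hb; apply: sub_sigma_algebra. Qed.

Lemma cball_meas x r : measurable (cball dist x r).
Proof.
rewrite -[cball _ _ _]setCK; apply: measurableC; apply: dopen_meas.
move=> y /= /negP; rewrite -ltNge => ry.
exists (dist x y - r); first by rewrite subr_gt0.
move=> z /= yz; apply/negP; rewrite -ltNge.
have := dist_tri x z y; rewrite (dist_sym z y).
move: yz ry; lra.
Qed.

Lemma mcont_measurable (phi : X -> R) :
  (forall x e, 0 < e -> exists2 del, 0 < del &
     forall y, dist x y < del -> `|phi x - phi y| < e) ->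
  measurable_fun setT phi.
Proof.
move=> hc; apply: (@measurability _ _ X _ setT phi (@RGenOInfty.G R)).
  exact: (@RGenOInfty.measurableE R).
move=> _ [_ [a ->] <-]; rewrite setTI; apply: dopen_meas.
move=> x /=; rewrite in_itv /= andbT => ax.
have [del del0 hd] := hc x (phi x - a) (ltac:(by rewrite subr_gt0)).
exists del => // y /= /hd; rewrite in_itv /= andbT.
move=> h; have := ler_norm (phi x - phi y); move: h; lra.
Qed.

Lemma rint_dist F r x y : r_interior dist F r x -> ~ F y -> r < dist x y.
Proof.
move=> xF yF; rewrite -lte_fin; apply: (lt_le_trans xF).
by apply: ereal_inf_lbound; exists y.
Qed.

Lemma rint_sub F r : 0 < r -> r_interior dist F r `<=` F.
Proof.
move=> r0 x xF; apply: contrapT => nF.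
have := @rint_dist F r x x xF nF; rewrite dist_xx; lra.
Qed.

Lemma rint_open F r : dopen dist (r_interior dist F r).
Proof.
move=> x; rewrite /r_interior /= => xF.
set m := ereal_inf _ in xF.
have key x' : (m - (dist x x')%:E <= ereal_inf [set (dist x' y)%:E | y in ~` F])%E.
  apply: le_ereal_inf_tmp => _ [y yF <-].
  rewrite leeBlDr // -EFinD.
  apply: (le_trans (ereal_inf_lbound _)); first by exists y.
  by rewrite lee_fin addrC dist_tri.
move: xF key; case Em: m => [m0| |] // xF key.
- exists (m0 - r); first by rewrite subr_gt0 -lte_fin.
  move=> x' /= hx; apply: (lt_le_trans _ (key x')).
  rewrite -EFinB lte_fin; rewrite lte_fin in xF; lra.
- exists 1 => // x' _ /=; apply: (lt_le_trans _ (key x')).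
  by rewrite /= ltry.
Qed.
End M.
Section K.
Context {R : realType} {d : measure_display} {X : measurableType d}.
Variable mu : {measure set X -> \bar R}.

Lemma cmeas_cabs (f : X -> R[i]) : cmeasurable f -> measurable_fun setT (fun x => cabs (f x)).
Proof.
case=> mr mi; rewrite /cabs.
apply: (measurableT_comp (continuous_measurable_fun (@sqrt_continuous R))).
by apply: measurable_funD; apply: measurable_funX.
Qed.

Lemma cmeasB (f g : X -> R[i]) : cmeasurable f -> cmeasurable g ->
  cmeasurable (fun x => f x - g x).
Proof.
case=> mrf mif [mrg mig]; split.
- have -> : (fun x => complex.Re (f x - g x)) = (fun x => complex.Re (f x) - complex.Re (g x)).
    by apply/funext => x; case: (f x) => ? ?; case: (g x).
  exact: measurable_funB.
- have -> : (fun x => complex.Im (f x - g x)) = (fun x => complex.Im (f x) - complex.Im (g x)).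
    by apply/funext => x; case: (f x) => ? ?; case: (g x).
  exact: measurable_funB.
Qed.

Lemma cmeasM (f g : X -> R[i]) : cmeasurable f -> cmeasurable g ->
  cmeasurable (fun x => f x * g x).
Proof.
case=> mrf mif [mrg mig]; split.
- have -> : (fun x => complex.Re (f x * g x)) = (fun x => complex.Re (f x) * complex.Re (g x) - complex.Im (f x) * complex.Im (g x)).
    by apply/funext => x; case: (f x) => ? ?; case: (g x).
  by apply: measurable_funB; apply: measurable_funM.
- have -> : (fun x => complex.Im (f x * g x)) = (fun x => complex.Re (f x) * complex.Im (g x) + complex.Im (f x) * complex.Re (g x)).
    by apply/funext => x; case: (f x) => ? ?; case: (g x).
  by apply: measurable_funD; apply: measurable_funM.
Qed.

Lemma cmeas_mulind (A : set X) (f : X -> R[i]) : measurable A -> cmeasurable f ->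
  cmeasurable (mulind A f).
Proof.
move=> mA mf; apply: cmeasM => //; split => /=.
- exact: measurable_indic.
- exact: measurable_cst.
Qed.

Lemma cabs_mulind (A : set X) (f : X -> R[i]) x :
  cabs (mulind A f x) = \1_A x * cabs (f x).
Proof. by rewrite /mulind cabsM cabs_real ger0_norm. Qed.

Lemma L2normE (f : X -> R[i]) :
  L2norm mu f = Lnorm mu 2%:E (EFin \o (fun x => cabs (f x))).
Proof. by []. Qed.

Lemma L2norm_le3 (h a b c : X -> R[i]) : cmeasurable h -> cmeasurable a ->
  cmeasurable b -> cmeasurable c ->
  (forall x, cabs (h x) <= cabs (a x) + cabs (b x) + cabs (c x)) ->
  (L2norm mu h <= L2norm mu a + L2norm mu b + L2norm mu c)%E.
Proof.
move=> mh ma mb mc hb; rewrite !L2normE.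
apply: Lnorm_le3; try exact: cmeas_cabs.
by move=> x; rewrite !ger0_norm ?cabs_ge0.
Qed.

Lemma L2norm_mulind (A : set X) (f : X -> R[i]) : measurable A -> cmeasurable f ->
  (L2norm mu (mulind A f) <= L2norm mu f)%E.
Proof.
move=> mA mf; rewrite !L2normE; apply: Lnorm_mono.
- exact/cmeas_cabs/cmeas_mulind.
- exact: cmeas_cabs.
move=> x; rewrite cabs_mulind !ger0_norm ?cabs_ge0 ?mulr_ge0 ?cabs_ge0//.
by rewrite ler_piMl ?cabs_ge0// indicE; case: (_ \in _).
Qed.

Lemma inL2_mulind (A : set X) (f : X -> R[i]) : measurable A -> inL2 mu f ->
  inL2 mu (mulind A f).
Proof.
move=> mA [mf ff]; split; first exact: cmeas_mulind.
by apply: (le_lt_trans (L2norm_mulind A f mA mf)).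
Qed.
End K.
Section P.
Context {R : realType} {d : measure_display} {X : measurableType d}.
Variable dist : X -> X -> R.
Variable mu : {measure set X -> \bar R}.
Hypothesis Hm : is_metric dist.
Hypothesis Hb : borel_structure dist.
Hypothesis Hbd : forall r : R, 0 < r ->
     exists M : R, forall x : X, (mu (cball dist x r) <= M%:E)%E.

Lemma ReB (a b : R[i]) : complex.Re (a - b) = complex.Re a - complex.Re b.
Proof. by case: a => ? ?; case: b. Qed.
Lemma ImB (a b : R[i]) : complex.Im (a - b) = complex.Im a - complex.Im b.
Proof. by case: a => ? ?; case: b. Qed.

Lemma kernel_cmeas (k : X -> X -> R[i]) x : good_kernel dist k -> cmeasurable (k x).
Proof.
case=> _ hu _; split; apply: (mcont_measurable dist Hb) => y e e0;
  have [del del0 hd] := hu e e0; exists del => // y' yy';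
  have := hd x y x y'; rewrite (dist_xx dist Hm) => /(_ del0 yy') h.
- by rewrite -ReB; apply: le_lt_trans h; exact: Re_le.
- by rewrite -ImB; apply: le_lt_trans h; exact: Im_le.
Qed.

Lemma sq_int (g : X -> R[i]) : inL2 mu g ->
  mu.-integrable setT (fun y => (cabs (g y) `^ 2)%:E).
Proof.
case=> mg; rewrite L2normE LnormE => fin.
have mc := cmeas_cabs g mg.
apply/integrableP; split.
  apply/measurable_EFinP; apply: (@measurableT_comp _ _ _ _ _ _ (@powR R ^~ 2)) => //.
under eq_integral => y _ do rewrite gee0_abs ?lee_fin ?powR_ge0//.
move: fin; under eq_integral => y _ do rewrite ger0_norm ?cabs_ge0//.
by apply: lty_poweRy; rewrite invr_neq0.
Qed.

Lemma ind_int x r : 0 < r ->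
  mu.-integrable setT (fun y => (\1_(cball dist x r) y)%:E).
Proof.
move=> r0; have [M hM] := Hbd r r0.
have mB := cball_meas dist Hm Hb x r.
apply/integrableP; split.
  by apply/measurable_EFinP; exact: measurable_indic.
under eq_integral => y _ do rewrite gee0_abs ?lee_fin//.
rewrite integral_indic// setIT.
by apply: (le_lt_trans (hM x)); rewrite ltry.
Qed.
End P.
Section IR.
Context {R : realType} {d : measure_display} {X : measurableType d}.
Variable mu : {measure set X -> \bar R}.
Local Notation int f := (mu.-integrable setT (EFin \o f)).

Lemma intR_D (f g : X -> R) : int f -> int g -> int (fun y => f y + g y).
Proof.
move=> hf hg; apply: (eq_integrable _ _ _ _ (integrableD _ hf hg)) => // y _; rewrite /= EFinD.
Qed.

Lemma intR_B (f g : X -> R) : int f -> int g -> int (fun y => f y - g y).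
Proof.
move=> hf hg; apply: (eq_integrable _ _ _ _ (integrableB _ hf hg)) => // y _; rewrite /= EFinB.
Qed.

Lemma intR_Z (k : R) (f : X -> R) : int f -> int (fun y => k * f y).
Proof.
move=> hf; apply: (eq_integrable _ _ _ _ (integrableZl _ k hf)) => // y _; rewrite /= EFinM.
Qed.

Lemma intR_le (f g : X -> R) : measurable_fun setT f ->
  (forall y, `|f y| <= `|g y|) -> int g -> int f.
Proof.
move=> mf fg hg; apply: (le_integrable _ _ _ hg) => //.
- exact/measurable_EFinP.
- by move=> y _; rewrite /comp !abse_EFin lee_fin.
Qed.
End IR.
Section P2.
Context {R : realType} {d : measure_display} {X : measurableType d}.
Variable dist : X -> X -> R.
Variable mu : {measure set X -> \bar R}.
Hypothesis Hm : is_metric dist.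
Hypothesis Hb : borel_structure dist.
Hypothesis Hbd : forall r : R, 0 < r ->
     exists M : R, forall x : X, (mu (cball dist x r) <= M%:E)%E.

Lemma rho_ex (r : R) : exists rho : R, 0 < rho /\ r <= rho - 1.
Proof. exists (`|r| + 1); have := normr_ge0 r; have := ler_norm r; lra. Qed.
Lemma L1 (r rho t : R) : r <= rho - 1 -> rho < t -> r < t.
Proof. lra. Qed.
Lemma L2 (C : R) : 0 <= C -> 0 < C + 1.
Proof. lra. Qed.
Lemma L3 (a b c rho r : R) : r <= rho - 1 -> rho < a -> a <= b + c -> b < 1 -> r < c.
Proof. lra. Qed.
Lemma L4 (eps C : R) : 0 < eps -> 0 <= C -> eps / (C + 1) * C < eps.
Proof.
move=> e0 C0; rewrite mulrAC ltr_pdivrMr; last lra.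
rewrite mulrDr mulr1; lra.
Qed.

Lemma c_le_sq (c : R) : 0 <= c -> c <= 1 + c `^ 2.
Proof. by move=> c0; rewrite powR_mulrn//; nra. Qed.

Lemma param_meas (P : R[i] -> R)
  (HPB : forall a b, P (a - b) = P a - P b)
  (HPn : forall z, `|P z| <= cabs z)
  (HPm : forall f : X -> R[i], cmeasurable f -> measurable_fun setT (fun x => P (f x)))
  (k : X -> X -> R[i]) (g : X -> R[i]) :
  good_kernel dist k -> inL2 mu g ->
  measurable_fun setT (fun x => Rintegral mu setT (fun y => P (k x y * g y))).
Proof.
move=> hk hg.
have [[Mk hMk] hu [r hr]] := hk.
have Mk0 (x : X) : 0 <= Mk by exact: le_trans (cabs_ge0 _) (hMk x x).
have [rho [rho0 rrho]] := rho_ex r.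
have mg := hg.1.
have mkg x : measurable_fun setT (fun y => P (k x y * g y)).
  apply: (HPm (fun y => k x y * g y)); exact: (cmeasM _ _ (kernel_cmeas dist Hm Hb k x hk) mg).
pose W x y := \1_(cball dist x rho) y + cabs (g y) `^ 2.
have Wint x : mu.-integrable setT (EFin \o W x).
  apply: intR_D; first exact: ind_int Hm Hb Hbd x rho rho0.
  exact: sq_int.
have Wge0 x y : 0 <= W x y by rewrite /W addr_ge0 ?powR_ge0.
have kout x y : ~ cball dist x rho y -> k x y = 0.
  move=> /negP; rewrite /cball /= -ltNge => h; apply: hr; exact: L1 rrho h.
have cW x y : cball dist x rho y -> cabs (g y) <= W x y.
  move=> hy; rewrite /W indicE mem_set//; exact/c_le_sq/cabs_ge0.
have bnd x y : `|P (k x y * g y)| <= `|Mk * W x y|.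
  rewrite [X in _ <= X]ger0_norm ?mulr_ge0 ?(Mk0 x)//; apply: (le_trans (HPn _)); rewrite cabsM.
  have [yB|yB] := pselect (cball dist x rho y).
    apply: ler_pM => //; [exact: cabs_ge0|exact: cabs_ge0|exact: cW].
  by rewrite kout// cabs0 mul0r mulr_ge0 ?(Mk0 x).
have hint x : mu.-integrable setT (EFin \o (fun y => P (k x y * g y))).
  by apply: intR_le (mkg x) (bnd x) _; apply: intR_Z.
apply: (mcont_measurable dist Hb) => x eps eps0.
pose C := Rintegral mu setT (W x).
have C0 : 0 <= C by apply: Rintegral_ge0 => y _; exact: Wge0.
pose e := eps / (C + 1).
have e0 : 0 < e by rewrite divr_gt0// L2.
have [del del0 hd] := hu e e0.
exists (Num.min del 1); first by rewrite lt_min del0 ltr01.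
move=> x'; rewrite lt_min => /andP[dx1 dx2].
rewrite -RintegralB//.
apply: (le_lt_trans (le_normr_Rintegral _ _)) => //; first exact: intR_B.
apply: (@le_lt_trans _ _ (Rintegral mu setT (fun y => e * W x y))).
  apply: le_Rintegral => //.
  - exact/integrable_norm/intR_B.
  - exact: intR_Z.
  move=> y _; rewrite -HPB -mulrBl; apply: (le_trans (HPn _)).
  rewrite cabsM.
  have [yB|yB] := pselect (cball dist x rho y).
    apply: ler_pM => //; [exact: cabs_ge0|exact: cabs_ge0| |exact: cW].
    apply: ltW; apply: hd => //; by rewrite (dist_xx dist Hm).
  rewrite kout// (_ : k x' y = 0); last first.
    apply: hr; move: yB => /negP; rewrite /cball /= -ltNge => h.
    exact: L3 rrho h (dist_tri dist Hm x x' y) dx2.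
  by rewrite subrr cabs0 mul0r mulr_ge0 ?(ltW e0).
rewrite RintegralZl//.
exact: L4.
Qed.
End P2.
Section Main.
Context {R : realType} {d : measure_display} {X : measurableType d}.
Variable dist : X -> X -> R.
Variable mu : {measure set X -> \bar R}.
Hypothesis Hm : is_metric dist.
Hypothesis Hb : borel_structure dist.
Hypothesis Hbd : forall r : R, 0 < r ->
     exists M : R, forall x : X, (mu (cball dist x r) <= M%:E)%E.

Lemma Op_cmeas k g : good_kernel dist k -> inL2 mu g -> cmeasurable (Op mu k g).
Proof.
move=> hk hg; split.
- apply: (param_meas dist mu Hm Hb Hbd (@complex.Re R) _ _ _ k g hk hg).
  + exact: ReB.
  + exact: Re_le.
  + by move=> f [].
- apply: (param_meas dist mu Hm Hb Hbd (@complex.Im R) _ _ _ k g hk hg).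
  + exact: ImB.
  + exact: Im_le.
  + by move=> f [].
Qed.

Lemma mul1c (z : R[i]) : Complex 1 0 * z = z.
Proof. case: z => a b; apply/eqP; rewrite eq_complex /=; apply/andP; split; apply/eqP; ring. Qed.
Lemma mul0c (z : R[i]) : Complex 0 0 * z = 0.
Proof. case: z => a b; apply/eqP; rewrite eq_complex /=; apply/andP; split; apply/eqP; ring. Qed.

Lemma cintegral0 : cintegral mu (fun _ => 0) = 0.
Proof. by rewrite /cintegral /Rintegral /= integral0. Qed.

Lemma half_sum (Y : \bar R) (e : R) : ((e/2)%:E + Y + (e/2)%:E = Y + e%:E)%E.
Proof.
case: Y => [y| |] //=; rewrite -?EFinD; first by congr EFin; field.

Qed.

Variable T : (X -> R[i]) -> (X -> R[i]).
Hypothesis HT : in_EX dist mu T.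
Variable xi : set (set X).
Hypothesis Hxi : coarse_filter dist xi.

Local Notation Bset := [set f | inL2 mu f /\ (L2norm mu f <= 1)%E].

Lemma B_mulind A f : measurable A -> Bset f -> Bset (mulind A f).
Proof.
move=> mA [hf nf]; split; first exact: inL2_mulind.
apply: le_trans nf; apply: L2norm_mulind => //; exact: hf.1.
Qed.

Lemma opnorm_ub S f : Bset f -> (L2norm mu (S f) <= opnorm mu S)%E.
Proof. by move=> hf; apply: ereal_sup_ubound; exists f. Qed.

Lemma approx (e : R) : 0 < e -> exists k (r : R), [/\ good_kernel dist k,
  0 < r, (forall x y, r < dist x y -> k x y = 0) &
  (opnorm mu (fun f x => (T f x - Op mu k f x)%R) <= e%:E)%E].
Proof.
move=> e0; have [k [hk hn]] := HT.2 e e0.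
have [_ _ [r hr]] := hk.
have [rho [rho0 rrho]] := rho_ex r.
exists k, rho; split => // x y h; apply: hr; exact: L1 rrho h.
Qed.

Lemma indic1 (A : set X) x : A x -> \1_A x = 1 :> R.
Proof. by move=> Ax; rewrite indicE mem_set. Qed.
Lemma indic0 (A : set X) x : ~ A x -> \1_A x = 0 :> R.
Proof. by move=> Ax; rewrite indicE memNset. Qed.

Lemma half_sum2 (Y : \bar R) (e : R) : (Y + (e/2)%:E + (e/2)%:E = Y + e%:E)%E.
Proof. by rewrite -addeA -EFinD; congr (_ + _)%E; congr EFin; field. Qed.

Lemma claimA F e : xi F -> measurable F -> 0 < e -> exists G, [/\ xi G, measurable G &
  (opnorm mu (fun f => mulind G (T f)) <= opnorm mu (fun f => T (mulind F f)) + e%:E)%E].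
Proof.
move=> xF mF e0.
have [k [r [hk r0 hr hn]]] := approx (e/2) (ltac:(by rewrite divr_gt0)).
pose G := r_interior dist F r.
have xG : xi G := Hxi.2 F r xF r0.
have mG : measurable G := dopen_meas dist Hb _ (rint_open dist Hm F r).
exists G; split => //.
apply: ge_ereal_sup => _ [f hf <-].
pose g := mulind F f.
have hg : Bset g := B_mulind F f mF hf.
have mTf := (HT.1 f hf.1).1.
have mTg := (HT.1 g hg.1).1.
rewrite -half_sum.
apply: le_trans.
  apply: (@L2norm_le3 _ _ _ mu (mulind G (T f)) (fun x => T f x - Op mu k f x)
     (T g) (fun x => T g x - Op mu k g x)).
  - exact: cmeas_mulind.
  - exact: cmeasB _ _ mTf (Op_cmeas k f hk hf.1).
  - exact: mTg.
  - exact: cmeasB _ _ mTg (Op_cmeas k g hk hg.1).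
  move=> x; rewrite cabs_mulind.
  have [Gx|Gx] := pselect (G x); last first.
    by rewrite indic0// mul0r !addr_ge0 ?cabs_ge0.
  rewrite indic1// mul1r.
  have EO : Op mu k f x = Op mu k g x.
    rewrite /Op; congr (cintegral mu _); apply/funext => y.
    have [Fy|Fy] := pselect (F y).
      by rewrite /g /mulind indic1// mul1c.
    by rewrite hr ?mul0r//; exact: (rint_dist dist F r x y Gx Fy).
  have E : T f x = (T f x - Op mu k f x) + T g x - (T g x - Op mu k g x).
    by rewrite EO; ring.
  rewrite [in X in X <= _]E.
  apply: (le_trans (cabsD _ _)); rewrite cabsN; apply: lerD => //; exact: cabsD.
apply: leeD; first apply: leeD.
- exact: le_trans (opnorm_ub (fun f x => (T f x - Op mu k f x)%R) f hf) hn.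
- exact: (opnorm_ub (fun f => T (mulind F f)) f hf).
- exact: le_trans (opnorm_ub (fun f x => (T f x - Op mu k f x)%R) g hg) hn.
Qed.

Lemma claimB F e : xi F -> measurable F -> 0 < e -> exists G, [/\ xi G, measurable G &
  (opnorm mu (fun f => T (mulind G f)) <= opnorm mu (fun f => mulind F (T f)) + e%:E)%E].
Proof.
move=> xF mF e0.
have [k [r [hk r0 hr hn]]] := approx (e/2) (ltac:(by rewrite divr_gt0)).
pose G := r_interior dist F r.
have xG : xi G := Hxi.2 F r xF r0.
have mG : measurable G := dopen_meas dist Hb _ (rint_open dist Hm F r).
exists G; split => //.
apply: ge_ereal_sup => _ [f hf <-].
pose g := mulind G f.
have hg : Bset g := B_mulind G f mG hf.
have mTg := (HT.1 g hg.1).1.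
rewrite -half_sum2.
apply: le_trans.
  apply: (@L2norm_le3 _ _ _ mu (T g) (mulind F (T g))
     (fun x => T g x - Op mu k g x) (fun x => T g x - Op mu k g x)).
  - exact: mTg.
  - exact: cmeas_mulind.
  - exact: cmeasB _ _ mTg (Op_cmeas k g hk hg.1).
  - exact: cmeasB _ _ mTg (Op_cmeas k g hk hg.1).
  move=> x; rewrite cabs_mulind.
  have [Fx|Fx] := pselect (F x).
    by rewrite indic1// mul1r -addrA lerDl addr_ge0 ?cabs_ge0.
  have EO : Op mu k g x = 0.
    rewrite /Op (_ : (fun y => k x y * g y) = fun _ => 0) ?cintegral0//.
    apply/funext => y.
    have [Gy|Gy] := pselect (G y).
      rewrite hr ?mul0r// dist_sym//; exact: (rint_dist dist F r y x Gy Fx).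
    by rewrite /g /mulind indic0// mul0c mulr0.
  by rewrite EO subr0 indic0// mul0r add0r lerDl cabs_ge0.
apply: leeD; first apply: leeD.
- exact: (opnorm_ub (fun f => mulind F (T f)) g hg).
- exact: le_trans (opnorm_ub (fun f x => (T f x - Op mu k f x)%R) g hg) hn.
- exact: le_trans (opnorm_ub (fun f x => (T f x - Op mu k f x)%R) g hg) hn.
Qed.
End Main.

Theorem lemma5p1 (R : realType) (d : measure_display) (X : measurableType d)
  (dist : X -> X -> R) (mu : {measure set X -> \bar R})
  (Hmetric : is_metric dist)
  (Hborel : borel_structure dist)
  (Hproper : proper_space dist)
  (Hnoncompact : ~ dcompact dist setT)
  (Hradon : radon dist mu)
  (Hsupp : full_support dist mu)
  (Hball_pos : forall (x : X) (r : R), 0 < r -> (0 < mu (cball dist x r))%E)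
  (Hball_bd : forall r : R, 0 < r ->
     exists M : R, forall x : X, (mu (cball dist x r) <= M%:E)%E)
  (T : (X -> R[i]) -> (X -> R[i])) (HT : in_EX dist mu T)
  (xi : set (set X)) (Hxi : coarse_filter dist xi) :
  ereal_inf [set opnorm mu (fun f => mulind F (T f)) | F in [set F | xi F /\ measurable F]]
  = ereal_inf [set opnorm mu (fun f => T (mulind F f)) | F in [set F | xi F /\ measurable F]].
Proof.
apply/eqP; rewrite eq_le; apply/andP; split.
- apply: le_ereal_inf_tmp => _ [F [xF mF] <-].
  apply/lee_addgt0Pr => e e0.
  have [G [xG mG hG]] := @claimA _ _ _ dist mu Hmetric Hborel Hball_bd T HT xi Hxi F e xF mF e0.
  apply: le_trans hG; apply: ereal_inf_lbound; by exists G.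
- apply: le_ereal_inf_tmp => _ [F [xF mF] <-].
  apply/lee_addgt0Pr => e e0.
  have [G [xG mG hG]] := @claimB _ _ _ dist mu Hmetric Hborel Hball_bd T HT xi Hxi F e xF mF e0.
  apply: le_trans hG; apply: ereal_inf_lbound; by exists G.
Qed.
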